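(* Let $m,n\ge1$, $\mathcal{H}=\mathbb{R}^{m\times n}$ with $\langle\mathbf{A},\mathbf{B}\rangle_{\mathcal{H}}=\mathbf{A}^\intercal\mathbf{B}$, and let $\mathbf{V}\in\mathbb{R}^{n\times n}$ be a nonzero symmetric matrix such that $\langle\langle\mathbf{X},\mathbf{X}\rangle_{\mathcal{H}},\mathbf{V}/\|\mathbf{V}\|\rangle\ge0$ for all $\mathbf{X}\in\mathcal{H}$; set $\|\mathbf{X}\|_{\mathcal{H}}(\mathbf{V})=\big(\langle\langle\mathbf{X},\mathbf{X}\rangle_{\mathcal{H}},\mathbf{V}/\|\mathbf{V}\|\rangle\big)^{1/2}$. Let $\mathcal{S}=(\mathbf{X}_1,\dots,\mathbf{X}_N)$ be a finite sequence of matrices in $\mathcal{H}$ and define $$\mathcal{H}\circ\mathcal{S}=\Big\{\Big(\big\langle\langle\mathbf{W},\mathbf{X}_1\rangle_{\mathcal{H}},\tfrac{\mathbf{V}}{\|\mathbf{V}\|}\big\rangle,\dots,\big\langle\langle\mathbf{W},\mathbf{X}_N\rangle_{\mathcal{H}},\tfrac{\mathbf{V}}{\|\mathbf{V}\|}\big\rangle\Big):\ \|\mathbf{W}\|_{\mathcal{H}}(\mathbf{V})\le1\Big\}\subseteq\mathbb{R}^N.$$ Then $R(\mathcal{H}\circ\mathcal{S})\le\dfrac{\max_i\|\mathbf{X}_i\|_{\mathcal{H}}(\mathbf{V})}{\sqrt N}$.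
   Context: $\langle\cdot,\cdot\rangle$ is the Frobenius inner product and $\|\cdot\|$ the Frobenius norm. For $\mathcal{A}\subseteq\mathbb{R}^N$, the Rademacher complexity is $R(\mathcal{A})=\frac1N\mathbb{E}_{\bm\sigma}\big[\sup_{\mathbf{a}\in\mathcal{A}}\sum_{i=1}^N\sigma_ia_i\big]$, where $\sigma_1,\dots,\sigma_N$ are i.i.d. uniform on $\{\pm1\}$. *)

(* Defs.v *)
From HB Require Import structures.
From mathcomp Require Import all_boot all_order all_algebra.
From mathcomp Require Import all_classical all_reals ereal.
Set Implicit Arguments. Unset Strict Implicit. Unset Printing Implicit Defensive.
Import Order.TTheory GRing.Theory Num.Theory.
Local Open Scope ring_scope.
Local Open Scope classical_set_scope.

Definition frob {R : realType} {p q : nat} (A B : 'M[R]_(p, q)) : R :=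
  \sum_(i < p) \sum_(j < q) A i j * B i j.

Definition frob_norm {R : realType} {p q : nat} (A : 'M[R]_(p, q)) : R :=
  Num.sqrt (frob A A).

Definition ipH {R : realType} {m n : nat} (A B : 'M[R]_(m, n)) : 'M[R]_n :=
  A^T *m B.

Definition Vn {R : realType} {n : nat} (V : 'M[R]_n) : 'M[R]_n :=
  (frob_norm V)^-1 *: V.

Definition normHV {R : realType} {m n : nat} (V : 'M[R]_n) (X : 'M[R]_(m, n)) : R :=
  Num.sqrt (frob (ipH X X) (Vn V)).

Definition HcompS {R : realType} {m n N : nat} (V : 'M[R]_n)
    (X : 'I_N -> 'M[R]_(m, n)) : set 'rV[R]_N :=
  [set a | exists W : 'M[R]_(m, n),
      normHV V W <= 1 /\ a = \row_(i < N) frob (ipH W (X i)) (Vn V)].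

(* Rademacher complexity, expectation over sigma uniform on {-1,1}^N
   (sigma encoded by b : {ffun 'I_N -> bool}, sigma_i = 1 if b i, else -1).
   The sup is taken in the extended reals to avoid junk values. *)
Definition sgn_of (b : bool) {R : realType} : R := if b then 1 else -1.

Definition rademacher {R : realType} {N : nat} (A : set 'rV[R]_N) : \bar R :=
  ((N%:R)^-1 * (2 ^+ N)^-1)%:E *
  \sum_(b : {ffun 'I_N -> bool})
     ereal_sup [set (\sum_(i < N) sgn_of (b i) * a ord0 i)%:E | a in A].

(* Main.v *)
Require Import Defs.
From HB Require Import structures.
From mathcomp Require Import all_boot all_order all_algebra.
From mathcomp Require Import all_classical all_reals ereal.
From mathcomp Require Import ring lra.
Import Order.TTheory GRing.Theory Num.Theory.
Local Open Scope ring_scope.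
Set Implicit Arguments. Unset Strict Implicit.

Section Bil.
Variables (R : realType) (m n : nat) (U : 'M[R]_n).

Definition BB (W X : 'M[R]_(m, n)) : R := frob (ipH W X) U.

Lemma frobDl (A B : 'M[R]_n) : frob (A + B) U = frob A U + frob B U.
Proof.
rewrite /frob -big_split /=; apply: eq_bigr => i _.
rewrite -big_split /=; apply: eq_bigr => j _; rewrite mxE; ring.
Qed.

Lemma frobZl (c : R) (A : 'M[R]_n) : frob (c *: A) U = c * frob A U.
Proof.
rewrite /frob mulr_sumr; apply: eq_bigr => i _.
rewrite mulr_sumr; apply: eq_bigr => j _; rewrite mxE; ring.
Qed.

Lemma frob0l : frob (0 : 'M[R]_n) U = 0.
Proof. by rewrite -(scale0r 0) frobZl mul0r. Qed.

Lemma frobT (A : 'M[R]_n) : U^T = U -> frob A^T U = frob A U.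
Proof.
move=> hU; rewrite /frob exchange_big /=; apply: eq_bigr => i _.
apply: eq_bigr => j _; rewrite mxE; congr (_ * _).
by rewrite -{1}hU mxE.
Qed.

Lemma BBDl W1 W2 X : BB (W1 + W2) X = BB W1 X + BB W2 X.
Proof. by rewrite /BB /ipH linearD /= mulmxDl frobDl. Qed.
Lemma BBDr W X1 X2 : BB W (X1 + X2) = BB W X1 + BB W X2.
Proof. by rewrite /BB /ipH mulmxDr frobDl. Qed.
Lemma BBZl c W X : BB (c *: W) X = c * BB W X.
Proof. by rewrite /BB /ipH linearZ /= -scalemxAl frobZl. Qed.
Lemma BBZr c W X : BB W (c *: X) = c * BB W X.
Proof. by rewrite /BB /ipH -scalemxAr frobZl. Qed.
Lemma BB0l X : BB 0 X = 0.
Proof. by rewrite -(scale0r 0) BBZl mul0r. Qed.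
Lemma BB0r W : BB W 0 = 0.
Proof. by rewrite -(scale0r 0) BBZr mul0r. Qed.
Lemma BBC W X : U^T = U -> BB W X = BB X W.
Proof. by move=> hU; rewrite /BB /ipH -frobT // trmx_mul trmxK. Qed.

Lemma BB_suml (I : finType) (F : I -> 'M[R]_(m, n)) X :
  BB (\sum_i F i) X = \sum_i BB (F i) X.
Proof. exact: (big_morph (fun W => BB W X) (fun a b => BBDl a b X) (BB0l X)). Qed.
Lemma BB_sumr (I : finType) (F : I -> 'M[R]_(m, n)) W :
  BB W (\sum_i F i) = \sum_i BB W (F i).
Proof. exact: (big_morph (fun X => BB W X) (fun a b => BBDr W a b) (BB0r W)). Qed.

Lemma BB_CS W S : U^T = U -> (forall Y, 0 <= BB Y Y) -> BB W W <= 1 ->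
  BB W S <= Num.sqrt (BB S S).
Proof.
move=> hU hpsd hW.
have key : forall t, 0 < t -> 2 * t * BB W S <= t ^+ 2 + BB S S.
  move=> t t0; have := hpsd (t *: W - S).
  rewrite BBDl BBDr BBDr !BBZl !BBZr -!scaleN1r !BBZl !BBZr (BBC S W hU).
  have t2 : 0 < t ^+ 2 by rewrite exprn_gt0.
  have : t ^+ 2 * BB W W <= t ^+ 2 by nra.
  nra.
have q0 := hpsd S.
have hs := sqr_sqrtr q0.
have s0 := sqrtr_ge0 (BB S S).
case: (ltrP 0 (Num.sqrt (BB S S))) => sp.
  have := key _ sp; rewrite hs; nra.
case: (lerP (BB W S) 0) => b0; first lra.
have := key _ b0. have : Num.sqrt (BB S S) = 0 by lra.
move=> e; move: hs; rewrite e expr0n /= => <-. nra.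
Qed.
End Bil.
Definition flip {N} (i : 'I_N) (b : {ffun 'I_N -> bool}) : {ffun 'I_N -> bool} :=
  [ffun k => if k == i then ~~ b k else b k].

Lemma flipK {N} (i : 'I_N) : involutive (flip i).
Proof.
move=> b; apply/ffunP => k; rewrite !ffunE.
by case: eqP => // _; rewrite negbK.
Qed.

Lemma sgn_sum (R : realType) N (i j : 'I_N) :
  \sum_(b : {ffun 'I_N -> bool}) (sgn_of (b i) : R) * sgn_of (b j) =
  if i == j then 2 ^+ N else 0.
Proof.
case: eqP => [<-|/eqP ij].
  rewrite (eq_bigr (fun _ => 1)); last by move=> b _; case: (b i); rewrite /sgn_of; ring.
  by rewrite sumr_const card_ffun card_bool card_ord -natrX.
set s := LHS.
have : s = - s.
  rewrite {1}/s (reindex_inj (can_inj (flipK i))) /= -sumrN.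
  apply: eq_bigr => b _; rewrite !ffunE eqxx eq_sym (negbTE ij).
  case: (b i); rewrite /sgn_of /=.
  by rewrite mulN1r mul1r. by rewrite mulN1r opprK mul1r.
lra.
Qed.

Unset Implicit Arguments.
Theorem lemma3 (R : realType) (m n N : nat) (hm : (0 < m)%N) (hn : (0 < n)%N)
    (hN : (0 < N)%N) (V : 'M[R]_n) (hV0 : V != 0) (hVsym : V^T = V)
    (hVpsd : forall X : 'M[R]_(m, n), 0 <= frob (ipH X X) (Vn V))
    (X : 'I_N -> 'M[R]_(m, n)) :
  (rademacher (HcompS V X) <=
    ((\big[Num.max/0]_(i < N) normHV V (X i)) / Num.sqrt (N%:R))%:E)%E.
Proof.
set U := Vn V.
have hU : U^T = U by rewrite /U /Vn linearZ /= hVsym.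
have hpsd : forall Y, 0 <= BB U Y Y := hVpsd.
set S := fun b : {ffun 'I_N -> bool} => \sum_(i < N) (sgn_of (b i) : R) *: X i.
set q := fun b => BB U (S b) (S b).
set M := \big[Num.max/0]_(i < N) normHV V (X i).
have hXM : forall i, normHV V (X i) <= M by move=> i; exact: le_bigmax.
have M0 : 0 <= M by apply: le_trans (hXM (Ordinal hN)); exact: sqrtr_ge0.
have hXM2 : forall i, BB U (X i) (X i) <= M ^+ 2.
  move=> i; have := hXM i; rewrite /normHV => h.
  have := sqr_sqrtr (hpsd (X i)); have := sqrtr_ge0 (frob (ipH (X i) (X i)) (Vn V)).
  rewrite /BB /U; nra.
have qexp : forall b, q b = \sum_i \sum_j
    ((sgn_of (b i) : R) * sgn_of (b j)) * BB U (X i) (X j).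
  move=> b; rewrite /q /S BB_suml; apply: eq_bigr => i _.
  rewrite BBZl BB_sumr mulr_sumr; apply: eq_bigr => j _; rewrite BBZr; ring.
have sumq : \sum_b q b = 2 ^+ N * \sum_i BB U (X i) (X i).
  rewrite (eq_bigr _ (fun b _ => qexp b)) exchange_big /= mulr_sumr.
  apply: eq_bigr => i _; rewrite exchange_big /=.
  rewrite (bigD1 i) //= [X in _ + X]big1 ?addr0.
    by rewrite -mulr_suml sgn_sum eqxx.
  move=> j ji; rewrite -mulr_suml sgn_sum eq_sym (negbTE ji); ring.
have sumqle : \sum_b q b <= 2 ^+ N * (N%:R * M ^+ 2).
  rewrite sumq ler_wpM2l ?exprn_ge0 //.
  apply: le_trans (ler_sum _ (fun i _ => hXM2 i)) _.
  by rewrite sumr_const card_ord mulr_natl.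
have supb : forall b : {ffun 'I_N -> bool},
  (ereal_sup [set (\sum_(i < N) sgn_of (b i) * a ord0 i)%:E | a in HcompS V X]
    <= (Num.sqrt (q b))%:E)%E.
  move=> b; apply: ge_ereal_sup => _ [a [W [hW ->]] <-].
  rewrite lee_fin.
  have -> : \sum_(i < N) sgn_of (b i) * (\row_i frob (ipH W (X i)) (Vn V)) ord0 i
      = BB U W (S b).
    rewrite /S BB_sumr; apply: eq_bigr => i _; by rewrite mxE BBZr.
  apply: BB_CS => //.
  move: hW; rewrite /normHV => h.
  have := sqr_sqrtr (hpsd W); have := sqrtr_ge0 (frob (ipH W W) (Vn V)).
  rewrite /BB /U; nra.
rewrite /rademacher.
have c0 : (0 <= (N%:R)^-1 * (2 ^+ N)^-1 :> R).
  by rewrite mulr_ge0 // invr_ge0 // exprn_ge0.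
apply: le_trans.
  apply: lee_wpmul2l; first by rewrite lee_fin.
  apply: lee_sum => b _; exact: supb.
rewrite /= sumEFin -EFinM lee_fin.
have q0 : forall b, 0 <= q b by move=> b; exact: hpsd.
set sN := Num.sqrt (N%:R : R).
have sN0 : 0 < sN by rewrite sqrtr_gt0 ltr0n.
have sN2 : sN ^+ 2 = N%:R by rewrite sqr_sqrtr // ler0n.
have p0 : (0 < 2 ^+ N :> R) by rewrite exprn_gt0.
have key : \sum_b Num.sqrt (q b) <= 2 ^+ N * (sN * M).
  case: (ltrP 0 M) => Mp; last first.
    have M00 : M = 0 by apply/eqP; rewrite eq_le Mp M0.
    have sq0 : \sum_b q b = 0.
      apply/eqP; rewrite eq_le; apply/andP; split; last by apply: sumr_ge0 => b _; exact: q0.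
      by move: sumqle; rewrite M00 expr2 !mulr0.
    rewrite big1 ?M00 ?mulr0 // => b _.
    by rewrite (psumr_eq0P (fun b _ => q0 b) sq0) // sqrtr0.
  set t := sN * M.
  have t0 : 0 < t by rewrite mulr_gt0.
  have per : forall b, 2 * t * Num.sqrt (q b) <= q b + t ^+ 2.
    move=> b; have := sqr_sqrtr (q0 b); have := sqrtr_ge0 (q b); have := sqr_ge0 (Num.sqrt (q b) - t); nra.
  have h := ler_sum (index_enum _) (P := predT) (fun b _ => per b).
  move: h; rewrite -mulr_sumr big_split /= sumr_const card_ffun card_bool card_ord.
  have ht2 : t ^+ 2 = N%:R * M ^+ 2 by rewrite /t exprMn sN2.
  rewrite -[_ *+ 2 ^ N]mulr_natr natrX => h.
  have : 2 * t * \sum_b Num.sqrt (q b) <= 2 * t * (2 ^+ N * t).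
    apply: le_trans h _; rewrite -ht2 in sumqle; nra.
  rewrite ler_pM2l ?mulr_gt0 //.
apply: le_trans (ler_wpM2l c0 key) _.
rewrite [X in X <= _](_ : _ = M / sN) //.
rewrite -sN2; field.
by rewrite (gt_eqF sN0) (gt_eqF p0).
Qed.
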